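(* Let $S$ be a nonempty set, and in the category $\mathbf{Sets}$ let $U:\mathbf{Sets}\to\mathbf{Sets}$ be the functor $X\mapsto X^S$, right adjoint to $F: X\mapsto S\times X$, with $T=UF$ the associated state monad. Then $U$ is monadic, i.e. the comparison functor $K:\mathbf{Sets}\to\mathbf{Alg}^T$, $K(Y)=(Y^S,\epsilon_Y^S)$, $K(g)=g^S$, is an equivalence of categories.
   Context: For a set $X$, $TX=(S\times X)^S$; the unit $\eta_X:X\to TX$ sends $x$ to $s\mapsto (s,x)$; the multiplication $\mu_X:TTX\to TX$ is $(\epsilon_{S\times X})^S$, i.e. it sends $s\mapsto (c[s], s'\mapsto (c'[s,s'],x[s,s']))$ to $s\mapsto (c'[s,c[s]],x[s,c[s]])$. Here $\epsilon_Z:S\times Z^S\to Z$, $(s,f)\mapsto f(s)$, is evaluation (the counit of the adjunction $F\dashv U$). A $T$-algebra is a pair $(X,h)$ with $h:TX\to X$ satisfying $h\circ Th=h\circ\mu_X$ and $h\circ\eta_X=\mathrm{id}_X$; a morphism $(X,h)\to(X',h')$ is a map $u:X\to X'$ with $h'\circ Tu=u\circ h$; these form the category $\mathbf{Alg}^T$. ''Monadic'' here means that $K$ is an equivalence of categories (not necessarily an isomorphism). *)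

(* Defs.v *)
From Stdlib Require Import FunctionalExtensionality ProofIrrelevance.

Set Implicit Arguments.
Unset Strict Implicit.

Record Category := {
  Obj :> Type;
  Hom : Obj -> Obj -> Type;
  idm : forall A, Hom A A;
  comp : forall A B C, Hom B C -> Hom A B -> Hom A C;
  comp_idl : forall A B (f : Hom A B), comp (idm B) f = f;
  comp_idr : forall A B (f : Hom A B), comp f (idm A) = f;
  comp_assoc : forall A B C D (h : Hom C D) (g : Hom B C) (f : Hom A B),
      comp h (comp g f) = comp (comp h g) f
}.
Arguments Hom {c} _ _.
Arguments idm {c} _.
Arguments comp {c A B C} _ _.

Record Functor (C D : Category) := {
  fobj :> C -> D;
  fmap : forall A B, Hom A B -> Hom (fobj A) (fobj B);
  fmap_id : forall A, fmap (idm A) = idm (fobj A);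
  fmap_comp : forall A B E (g : Hom B E) (f : Hom A B),
      fmap (comp g f) = comp (fmap g) (fmap f)
}.
Arguments fmap {C D} f0 {A B} _.

Definition is_equivalence (C D : Category) (F : Functor C D) : Prop :=
  exists (G : Functor D C)
         (u : forall X : C, Hom X (G (F X)))
         (u' : forall X : C, Hom (G (F X)) X)
         (e : forall Y : D, Hom (F (G Y)) Y)
         (e' : forall Y : D, Hom Y (F (G Y))),
    (forall X X' (f : Hom X X'), comp (fmap G (fmap F f)) (u X) = comp (u X') f) /\
    (forall X, comp (u' X) (u X) = idm X) /\
    (forall X, comp (u X) (u' X) = idm (G (F X))) /\
    (forall Y Y' (g : Hom Y Y'), comp g (e Y) = comp (e Y') (fmap F (fmap G g))) /\
    (forall Y, comp (e' Y) (e Y) = idm (F (G Y))) /\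
    (forall Y, comp (e Y) (e' Y) = idm Y).

Definition Sets : Category.
Proof.
  refine {| Obj := Type; Hom := fun X Y => X -> Y;
            idm := fun X (x : X) => x;
            comp := fun X Y Z (g : Y -> Z) (f : X -> Y) (x : X) => g (f x) |};
  reflexivity.
Defined.

(** * The state monad T = U F, with F X = S × X and U X = X^S *)

Section StateMonad.
Variable S : Type.

Definition T (X : Type) : Type := S -> S * X.

Definition Tmap (X Y : Type) (f : X -> Y) (t : T X) : T Y :=
  fun s => (fst (t s), f (snd (t s))).

Definition etaT (X : Type) (x : X) : T X := fun s => (s, x).

Definition ev (Z : Type) (p : S * (S -> Z)) : Z := snd p (fst p).

(** [mu_X = (epsilon_{S × X})^S] *)
Definition muT (X : Type) (tt : T (T X)) : T X := fun s => ev (tt s).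

Record TAlg := {
  carrier : Type;
  alg : T carrier -> carrier;
  alg_assoc : forall t : T (T carrier), alg (Tmap alg t) = alg (muT t);
  alg_unit : forall x : carrier, alg (etaT x) = x
}.

Arguments alg : clear implicits.

Record AlgHom (A B : TAlg) := {
  amap :> carrier A -> carrier B;
  amap_hom : forall t : T (carrier A), alg B (Tmap amap t) = amap (alg A t)
}.

Lemma AlgHom_eq (A B : TAlg) (f g : AlgHom A B) :
  (forall x, f x = g x) -> f = g.
Proof.
  destruct f as [f hf], g as [g hg]; simpl; intro H.
  assert (f = g) by (apply functional_extensionality; exact H).
  subst g. f_equal. apply proof_irrelevance.
Qed.

Definition AlgHom_id (A : TAlg) : AlgHom A A.
Proof.
  refine {| amap := fun x => x |}. intro t. f_equal.
  apply functional_extensionality; intro s; unfold Tmap; destruct (t s); reflexivity.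
Defined.

Definition AlgHom_comp (A B C : TAlg) (g : AlgHom B C) (f : AlgHom A B)
  : AlgHom A C.
Proof.
  refine {| amap := fun x => g (f x) |}. intro t.
  rewrite <- (amap_hom f t), <- (amap_hom g). reflexivity.
Defined.

Definition AlgT : Category.
Proof.
  refine {| Obj := TAlg; Hom := AlgHom; idm := AlgHom_id; comp := AlgHom_comp |};
  intros; apply AlgHom_eq; reflexivity.
Defined.

Definition K_obj (Y : Type) : TAlg.
Proof.
  refine {| carrier := S -> Y; alg := fun c s => ev (c s) |}.
  - intro t. reflexivity.
  - intro x. reflexivity.
Defined.

Definition K_hom (Y Y' : Type) (g : Y -> Y') : AlgHom (K_obj Y) (K_obj Y').
Proof.
  exact (@Build_AlgHom (K_obj Y) (K_obj Y') (fun (f : S -> Y) (s : S) => g (f s))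
           (fun t => eq_refl)).
Defined.

Definition K : Functor Sets AlgT.
Proof.
  refine (@Build_Functor Sets AlgT K_obj K_hom _ _);
  intros; apply AlgHom_eq; reflexivity.
Defined.

End StateMonad.

(* Main.v *)
Require Import Defs.
From Stdlib Require Import FunctionalExtensionality ProofIrrelevance.
Set Implicit Arguments.
Unset Strict Implicit.

Section Proof.
Variable S : Type.

Definition pset (A : TAlg S) (s : S) (x : carrier A) : carrier A :=
  alg (t0:=A) (fun _ => (s, x)).

Definition Gobj (A : TAlg S) : Type := {x : carrier A | forall s, @pset A s x = x}.

Lemma pset_pset (A : TAlg S) s s' x : @pset A s' (@pset A s x) = @pset A s x.
Proof.
  unfold pset.
  pose (t := (fun _ : S => (s', fun _ : S => (s, x))) : T S (T S (carrier A))).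
  pose proof (alg_assoc (t0:=A) t) as H. exact H.
Qed.

Lemma sig_ext (A : Type) (P : A -> Prop) (a b : {x | P x}) :
  proj1_sig a = proj1_sig b -> a = b.
Proof.
  destruct a, b; simpl; intros ->; f_equal; apply proof_irrelevance.
Qed.

Definition Gmap (A B : TAlg S) (f : AlgHom A B) (x : Gobj A) : Gobj B.
Proof.
  refine (exist _ (f (proj1_sig x)) _).
  intro s. destruct x as [x Hx]; simpl.
  unfold pset. pose proof (amap_hom f (fun _ : S => (s, x))) as H.
  unfold Tmap in H; simpl in H. rewrite H. f_equal. apply Hx.
Defined.

Definition G : Functor (AlgT S) Sets.
Proof.
  refine (@Build_Functor (AlgT S) Sets Gobj Gmap _ _);
  intros; apply functional_extensionality; intro x; apply sig_ext; reflexivity.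
Defined.

Definition rr (A : TAlg S) (f : S -> Gobj A) : carrier A :=
  alg (t0:=A) (fun s => (s, proj1_sig (f s))).

Definition ee' (A : TAlg S) (x : carrier A) : S -> Gobj A :=
  fun s => exist (fun y => forall s0, @pset A s0 y = y) (@pset A s x) (fun s' => @pset_pset A s s' x).

Lemma rr_ee' (A : TAlg S) (x : carrier A) : rr (@ee' A x) = x.
Proof.
  unfold rr, ee'; simpl. unfold pset.
  pose (t := (fun s : S => (s, fun _ : S => (s, x))) : T S (T S (carrier A))).
  pose proof (alg_assoc (t0:=A) t) as H. unfold Tmap, muT, ev in H; simpl in H.
  rewrite H. apply (alg_unit (t0:=A)).
Qed.

Lemma ee'_rr (A : TAlg S) (f : S -> Gobj A) : ee' (rr f) = f.
Proof.
  apply functional_extensionality; intro s. apply sig_ext.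
  unfold rr, ee'; simpl. unfold pset.
  pose (t := (fun _ : S => (s, fun s' : S => (s', proj1_sig (f s'))))
             : T S (T S (carrier A))).
  pose proof (alg_assoc (t0:=A) t) as H. unfold Tmap, muT, ev in H; simpl in H.
  etransitivity; [exact H|]. exact (proj2_sig (f s) s).
Qed.

Lemma ee'_hom (A : TAlg S) (t : T S (carrier A)) :
  alg (t0 := K_obj S (Gobj A)) (Tmap (@ee' A) t) = ee' (alg (t0:=A) t).
Proof.
  apply functional_extensionality; intro s. apply sig_ext.
  simpl. unfold ev, Tmap, ee'; simpl. unfold pset.
  pose (t' := (fun _ : S => (s, t)) : T S (T S (carrier A))).
  pose proof (alg_assoc (t0:=A) t') as H. unfold Tmap, muT, ev in H; simpl in H.
  rewrite H. destruct (t s); reflexivity.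
Qed.

Definition ee'h (A : TAlg S) : AlgHom A (K_obj S (Gobj A)) :=
  @Build_AlgHom S A (K_obj S (Gobj A)) (@ee' A) (@ee'_hom A).

Lemma rr_hom (A : TAlg S) (t : T S (carrier (K_obj S (Gobj A)))) :
  alg (t0:=A) (Tmap (@rr A) t) = rr (alg (t0 := K_obj S (Gobj A)) t).
Proof.
  rewrite <- (rr_ee' (alg (t0:=A) (Tmap (@rr A) t))).
  f_equal. rewrite <- ee'_hom. f_equal.
  apply functional_extensionality; intro s. unfold Tmap; simpl.
  rewrite ee'_rr. destruct (t s); reflexivity.
Qed.

Definition rrh (A : TAlg S) : AlgHom (K_obj S (Gobj A)) A :=
  @Build_AlgHom S (K_obj S (Gobj A)) A (@rr A) (@rr_hom A).

End Proof.

Theorem theorem1 (S : Type) (HS : inhabited S) : is_equivalence (K S).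
Proof.
  destruct HS as [s0].
  exists (G S).
  exists (fun (X : Type) (x : X) =>
            exist (fun y => forall s, @pset S (K_obj S X) s y = y) (fun _ : S => x) (fun s => eq_refl) : Gobj (K_obj S X)).
  exists (fun (X : Type) (f : Gobj (K_obj S X)) => proj1_sig f s0).
  exists (@rrh S). exists (@ee'h S).
  refine (conj _ (conj _ (conj _ (conj _ (conj _ _))))).
  - intros X X' f. apply functional_extensionality; intro x. apply sig_ext. reflexivity.
  - intros X. reflexivity.
  - intros X. simpl. apply functional_extensionality; intros [f Hf]. apply sig_ext.
    simpl. apply functional_extensionality; intro s.
    pose proof (f_equal (fun g => g s) (Hf s0)) as H. simpl in H.
    unfold pset, ev in H; simpl in H. exact H.
  - intros Y Y' g. apply AlgHom_eq; intro f. simpl. unfold rr.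
    rewrite <- (amap_hom g). reflexivity.
  - intros Y. apply AlgHom_eq; intro f. simpl. apply ee'_rr.
  - intros Y. apply AlgHom_eq; intro x. simpl. apply rr_ee'.
Qed.
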